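(* Let $0\le\alpha\le1$ and define $\delta(X,Y)=\alpha\, m(X,Y)+(1-\alpha)M(X,Y)$ for finite sets $X,Y$. Then $\delta$ satisfies the triangle inequality $\delta(X,Y)\le\delta(X,Z)+\delta(Z,Y)$ for all finite subsets $X,Y,Z$ of $\mathbb N$ if and only if $\alpha\le\tfrac12$.
   Context: For finite sets $X,Y$ let $m(X,Y)=\min\{|X\setminus Y|,|Y\setminus X|\}$ and $M(X,Y)=\max\{|X\setminus Y|,|Y\setminus X|\}$. *)

(* Defs.v *)
From HB Require Import structures.
From mathcomp Require Import all_boot all_order all_algebra.
From mathcomp Require Import finmap.
From mathcomp Require Import reals.
Set Implicit Arguments. Unset Strict Implicit. Unset Printing Implicit Defensive.
Import Order.TTheory GRing.Theory Num.Theory.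
Local Open Scope fset_scope.
Local Open Scope ring_scope.

Definition msmall (X Y : {fset nat}) : nat := minn #|` X `\` Y| #|` Y `\` X|.
Definition mbig (X Y : {fset nat}) : nat := maxn #|` X `\` Y| #|` Y `\` X|.

Definition delta (R : realType) (alpha : R) (X Y : {fset nat}) : R :=
  alpha * (msmall X Y)%:R + (1 - alpha) * (mbig X Y)%:R.

(* Main.v *)
Require Import Defs.
From HB Require Import structures.
From mathcomp Require Import all_boot all_order all_algebra.
From mathcomp Require Import finmap.
From mathcomp Require Import reals.
From mathcomp Require Import lra ring.
Import Order.TTheory GRing.Theory Num.Theory.
Local Open Scope ring_scope.

Lemma cardD_tri (X Y Z : {fset nat}) :
  (#|` (X `\` Y)%fset| <= #|` (X `\` Z)%fset| + #|` (Z `\` Y)%fset|)%N.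
Proof.
apply: leq_trans (leq_card_fsetU _ _).
apply: fsubset_leq_card; apply/fsubsetP => x.
rewrite !inE => /andP [xnY xX]; rewrite xnY xX andbT /=.
by case: (x \in Z).
Qed.

Lemma delta_eq (R : realType) (alpha : R) X Y :
  delta alpha X Y = alpha * (#|` (X `\` Y)%fset| + #|` (Y `\` X)%fset|)%:R
     + (1 - 2 * alpha) * (mbig X Y)%:R.
Proof.
rewrite /delta -addn_min_max /mbig /msmall natrD. lra.
Qed.

Theorem mainTheorem7 (R : realType) (alpha : R) (h0 : 0 <= alpha) (h1 : alpha <= 1) :
  (forall X Y Z : {fset nat}, delta alpha X Y <= delta alpha X Z + delta alpha Z Y)
  <-> alpha <= 1 / 2.
Proof.
split.
- move=> H; have := H [fset 1%N]%fset [fset 2%N]%fset fset0.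
  rewrite /delta /msmall /mbig !fsetD0 !fset0D !cardfs0 !cardfs1.
  have -> : ([fset 1%N] `\` [fset 2%N])%fset = [fset 1%N]%fset.
    by apply/fsetP => x; rewrite !inE; case: eqP => // ->.
  have -> : ([fset 2%N] `\` [fset 1%N])%fset = [fset 2%N]%fset.
    by apply/fsetP => x; rewrite !inE; case: eqP => // ->.
  rewrite !cardfs1 /=. have -> : minn 1 1 = 1%N by []. have -> : maxn 1 1 = 1%N by []. have -> : minn 1 0 = 0%N by []. have -> : maxn 1 0 = 1%N by []. have -> : minn 0 1 = 0%N by []. have -> : maxn 0 1 = 1%N by []. lra.
- move=> ha X Y Z; rewrite !delta_eq.
  set a := #|` (X `\` Y)%fset|; set b := #|` (Y `\` X)%fset|.
  set c := #|` (X `\` Z)%fset|; set d := #|` (Z `\` X)%fset|.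
  set e := #|` (Z `\` Y)%fset|; set f := #|` (Y `\` Z)%fset|.
  have h1' : (a <= c + e)%N by apply: cardD_tri.
  have h2' : (b <= f + d)%N by apply: cardD_tri.
  have hs : ((a + b)%:R <= (c + d)%:R + (e + f)%:R :> R).
    rewrite -natrD ler_nat.
    apply: leq_trans (leq_add h1' h2') _.
    rewrite addnACA; apply/eq_leq; ring.
  have hm : ((maxn a b)%:R <= (maxn c d)%:R + (maxn e f)%:R :> R).
    rewrite -natrD ler_nat geq_max; apply/andP; split.
      exact: leq_trans h1' (leq_add (leq_maxl _ _) (leq_maxl _ _)).
    apply: leq_trans h2' _; rewrite addnC.
    exact: leq_add (leq_maxr _ _) (leq_maxr _ _).
  rewrite /mbig -/a -/b -/c -/d -/e -/f.
  have := ler_wpM2l h0 hs.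
  have h2a : 0 <= 1 - 2 * alpha by lra.
  have := ler_wpM2l h2a hm.
  rewrite !mulrDr. lra.
Qed.
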